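(* Let $\sigma_j$, $\lambda_j$, $\Lambda_j$ be, respectively, the eigenvalues on $(0,1)$ of the buckling problem $u''''=-\sigma u''$ with $u(0)=u'(0)=u(1)=u'(1)=0$, of the Dirichlet Laplacian $-u''=\lambda u$ with $u(0)=u(1)=0$, and of the Dirichlet Bilaplacian $u''''=\Lambda u$ with $u(0)=u'(0)=u(1)=u'(1)=0$, each listed in increasing order. Then for all $j\in\mathbb N$, $$\Lambda_j>\lambda_j\sigma_j.$$
   Context: All three problems have simple eigenvalues forming increasing sequences $\to+\infty$; the problems are understood in the weak sense in $H^1_0(0,1)$ (Laplacian) and $H^2_0(0,1)$ (the two fourth-order problems). *)

(* Defs.v *)
From Stdlib Require Import Reals List.
From Coquelicot Require Import Coquelicot.
Open Scope R_scope.

(* Smooth functions on R (eigenfunctions of these 1D problems are real-analytic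
   combinations of sin/cos/sinh/cosh/polynomials, hence extend smoothly). *)
Definition smooth (u : R -> R) : Prop := forall (k : nat) (x : R), ex_derive_n u k x.

Definition nontrivial01 (u : R -> R) : Prop := exists x, 0 < x < 1 /\ u x <> 0.

Definition lap_eig (lam : R) : Prop :=
  exists u : R -> R, smooth u /\ nontrivial01 u /\
    u 0 = 0 /\ u 1 = 0 /\
    (forall x, 0 < x < 1 -> - Derive_n u 2 x = lam * u x).

Definition bilap_eig (Lam : R) : Prop :=
  exists u : R -> R, smooth u /\ nontrivial01 u /\
    u 0 = 0 /\ Derive_n u 1 0 = 0 /\ u 1 = 0 /\ Derive_n u 1 1 = 0 /\
    (forall x, 0 < x < 1 -> Derive_n u 4 x = Lam * u x).

Definition buck_eig (sig : R) : Prop :=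
  exists u : R -> R, smooth u /\ nontrivial01 u /\
    u 0 = 0 /\ Derive_n u 1 0 = 0 /\ u 1 = 0 /\ Derive_n u 1 1 = 0 /\
    (forall x, 0 < x < 1 -> Derive_n u 4 x = - sig * Derive_n u 2 x).

(* [nth_eig E j x]: x is an eigenvalue and exactly j eigenvalues are strictly
   smaller than x, i.e. x is the (j+1)-th eigenvalue in increasing order
   (eigenvalues are simple, so listed without repetition). *)
Definition nth_eig (E : R -> Prop) (j : nat) (x : R) : Prop :=
  E x /\ exists l : list R, length l = j /\ NoDup l /\
    (forall y, In y l <-> (E y /\ y < x)).

(* Main.v *)
Require Import Defs.
From Stdlib Require Import Reals Lra Lia Psatz List.
From Coquelicot Require Import Coquelicot.
Open Scope R_scope.

Lemma cont_of_ex_derive (f : R -> R) x : ex_derive f x -> continuity_pt f x.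
Proof. intro H. apply continuity_pt_filterlim. apply (ex_derive_continuous f x H). Qed.


Lemma ID_mult (f g : R -> R) x df dg : is_derive f x df -> is_derive g x dg ->
  is_derive (fun t => f t * g t) x (df * g x + f x * dg).
Proof. intros H1 H2. apply is_derive_Reals. apply is_derive_Reals in H1, H2.
  apply (derivable_pt_lim_mult f g x df dg H1 H2). Qed.
Lemma ID_plus (f g : R -> R) x df dg : is_derive f x df -> is_derive g x dg ->
  is_derive (fun t => f t + g t) x (df + dg).
Proof. intros H1 H2. apply is_derive_Reals. apply is_derive_Reals in H1, H2.
  apply (derivable_pt_lim_plus f g x df dg H1 H2). Qed.
Lemma ID_minus (f g : R -> R) x df dg : is_derive f x df -> is_derive g x dg ->
  is_derive (fun t => f t - g t) x (df - dg).
Proof. intros H1 H2. apply is_derive_Reals. apply is_derive_Reals in H1, H2.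
  apply (derivable_pt_lim_minus f g x df dg H1 H2). Qed.
Lemma ID_scal (f : R -> R) a x df : is_derive f x df ->
  is_derive (fun t => a * f t) x (a * df).
Proof. intros H1. apply is_derive_Reals. apply is_derive_Reals in H1.
  apply (derivable_pt_lim_scal f a x df H1). Qed.
Lemma ID_ext (f : R -> R) x d1 d2 : d1 = d2 -> is_derive f x d1 -> is_derive f x d2.
Proof. intros ->; auto. Qed.

Lemma mvt (f df : R -> R) x y : (forall z, is_derive f z (df z)) -> x < y ->
  exists c, x < c < y /\ f y - f x = df c * (y - x).
Proof.
  intros Hd Hxy. destruct (MVT_cor2 f df x y Hxy) as [c [H1 H2]].
  - intros c _. apply is_derive_Reals, Hd.
  - exists c; split; auto.
Qed.

Lemma mono_nonpos (f df : R -> R) a b :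
  (forall x, is_derive f x (df x)) -> (forall x, a < x < b -> df x <= 0) ->
  forall x y, a <= x -> x <= y -> y <= b -> f y <= f x.
Proof.
  intros Hd Hs x y H1 H2 H3.
  destruct (Req_dec x y) as [->|Hne]; [lra|].
  destruct (mvt f df x y Hd) as [c [Hc Heq]]; [lra|].
  assert (df c <= 0) by (apply Hs; lra). nra.
Qed.

Lemma const_deriv0 (f df : R -> R) a b :
  (forall x, is_derive f x (df x)) -> (forall x, a < x < b -> df x = 0) ->
  forall x, a <= x <= b -> f x = f a.
Proof.
  intros Hd Hs x Hx.
  assert (f x <= f a).
  { apply (mono_nonpos f df a b); auto; try lra. intros; rewrite Hs; lra. }
  assert (f a <= f x).
  { assert (- f x <= - f a); [|lra].
    apply (mono_nonpos (fun t => - f t) (fun t => - df t) a b); try lra.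
    - intros; apply is_derive_Reals; apply derivable_pt_lim_opp; apply is_derive_Reals, Hd.
    - intros; rewrite Hs; lra. }
  lra.
Qed.

Lemma first_order0 (f f1 : R -> R) c :
  (forall x, is_derive f x (f1 x)) -> (forall x, 0 < x < 1 -> f1 x = c * f x) ->
  f 0 = 0 -> forall x, 0 <= x <= 1 -> f x = 0.
Proof.
  intros Hd Hode H0 x Hx.
  set (g := fun t => f t * exp (- c * t)).
  assert (Hg : forall t, is_derive g t (f1 t * exp (- c * t) + f t * (- c * exp (- c * t)))).
  { intro t. unfold g. apply (ID_mult f (fun s => exp (- c * s))). apply Hd.
    auto_derive; auto; ring. }
  assert (E := const_deriv0 g _ 0 1 Hg).
  assert (g x = g 0).
  { apply E; auto. intros t Ht. rewrite Hode; auto. ring. }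
  unfold g in H. rewrite H0 in H. assert (exp (- c * x) > 0) by apply exp_pos.
  nra.
Qed.

Definition chain2 (w0 w1 w2 : R -> R) :=
  (forall x, is_derive w0 x (w1 x)) /\ (forall x, is_derive w1 x (w2 x)).

Lemma L_hyp w0 w1 w2 m : chain2 w0 w1 w2 ->
  (forall x, 0 < x < 1 -> w2 x = m * m * w0 x) -> w0 0 = 0 -> w1 0 = 0 ->
  forall x, 0 <= x <= 1 -> w0 x = 0 /\ w1 x = 0.
Proof.
  intros [D0 D1] Hode H0 H1.
  set (p := fun t => w1 t - m * w0 t).
  assert (Hp : forall x, 0 <= x <= 1 -> p x = 0).
  { apply (first_order0 p (fun t => w2 t - m * w1 t) (- m)).
    - intro x. unfold p. apply ID_minus; auto. apply ID_scal; auto.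
    - intros x Hx. unfold p. rewrite Hode; auto. ring.
    - unfold p. rewrite H0, H1. ring. }
  assert (Hw : forall x, 0 <= x <= 1 -> w0 x = 0).
  { apply (first_order0 w0 w1 m); auto.
    intros x Hx. assert (p x = 0) by (apply Hp; lra). unfold p in H. lra. }
  intros x Hx. split; [auto|]. assert (p x = 0) by auto. unfold p in H.
  rewrite Hw in H; auto. lra.
Qed.

Lemma L_osc w0 w1 w2 m : chain2 w0 w1 w2 ->
  (forall x, 0 < x < 1 -> w2 x = - (m * m) * w0 x) -> w0 0 = 0 -> w1 0 = 0 ->
  forall x, 0 <= x <= 1 -> w0 x = 0 /\ w1 x = 0.
Proof.
  intros [D0 D1] Hode H0 H1.
  set (E := fun t => w1 t * w1 t + m * m * (w0 t * w0 t)).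
  assert (HE : forall x, 0 <= x <= 1 -> E x = 0).
  { apply (first_order0 E (fun t => (w2 t * w1 t + w1 t * w2 t) + m * m * (w1 t * w0 t + w0 t * w1 t)) 0).
    - intro x. unfold E. apply ID_plus. apply ID_mult; auto.
      apply ID_scal. apply ID_mult; auto.
    - intros x Hx. rewrite Hode; auto. ring.
    - unfold E. rewrite H0, H1. ring. }
  assert (Hw1 : forall x, 0 <= x <= 1 -> w1 x = 0).
  { intros x Hx. specialize (HE x Hx). unfold E in HE. nra. }
  assert (Hw : forall x, 0 <= x <= 1 -> w0 x = 0).
  { apply (first_order0 w0 w1 0); auto. intros x Hx. rewrite Hw1; lra. }
  intros x Hx; split; auto.
Qed.

Lemma smooth_chain (u : R -> R) k x : smooth u -> is_derive (Derive_n u k) x (Derive_n u (S k) x).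
Proof. intro Hs. apply Derive_correct. apply (Hs (S k) x). Qed.

Lemma smooth_cont (u : R -> R) k x : smooth u -> continuity_pt (Derive_n u k) x.
Proof. intro Hs. apply cont_of_ex_derive. apply (Hs (S k) x). Qed.

Lemma edge (g : R -> R) c : continuity_pt g c -> 0 <= c <= 1 ->
  (forall x, 0 < x < 1 -> g x = 0) -> g c = 0.
Proof.
  intros Hc Hc01 Hz. destruct (Req_dec (g c) 0) as [|Hne]; auto. exfalso.
  destruct (Hc (Rabs (g c))) as [d [Hd H]]. { apply Rabs_pos_lt; auto. }
  set (h := Rmin (d/2) (1/4)).
  assert (Hh : 0 < h <= 1/4 /\ h < d). { unfold h. split. split. apply Rmin_glb_lt; lra. apply Rmin_r.
    apply Rle_lt_trans with (d/2). apply Rmin_l. lra. }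
  destruct (Rle_dec c (1/2)).
  - specialize (H (c + h)). simpl in H. unfold R_dist in H. rewrite Hz in H by lra.
    replace (c + h - c) with h in H by ring.
    assert (Rabs (0 - g c) = Rabs (g c)) by (rewrite Rabs_minus_sym; f_equal; ring).
    assert (Rabs h = h) by (apply Rabs_right; lra). 
    rewrite H0, H1 in H. assert (Rabs (g c) < Rabs (g c)); [|lra]. apply H. unfold D_x, no_cond; repeat split; lra.
  - specialize (H (c - h)). simpl in H. unfold R_dist in H. rewrite Hz in H by lra.
    replace (c - h - c) with (- h) in H by ring.
    assert (Rabs (0 - g c) = Rabs (g c)) by (rewrite Rabs_minus_sym; f_equal; ring).
    assert (Rabs (-h) = h) by (rewrite Rabs_Ropp; apply Rabs_right; lra).
    rewrite H0, H1 in H. assert (Rabs (g c) < Rabs (g c)); [|lra]. apply H. unfold D_x, no_cond; repeat split; lra.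
Qed.

Lemma deriv_zero_open (F : R -> R) x0 l : (forall x, 0 < x < 1 -> F x = 0) -> 0 < x0 < 1 ->
  is_derive F x0 l -> l = 0.
Proof.
  intros Hz Hx Hd.
  assert (Hpos : 0 < Rmin x0 (1 - x0)) by (apply Rmin_glb_lt; lra).
  assert (Hl : locally x0 (fun t => F t = (fun _ : R => 0) t)).
  { exists (mkposreal _ Hpos). intros y Hy. simpl. apply Hz.
    unfold ball in Hy; simpl in Hy; unfold AbsRing_ball, abs, minus, plus, opp in Hy; simpl in Hy.
    assert (Rmin x0 (1 - x0) <= x0) by apply Rmin_l. assert (Rmin x0 (1 - x0) <= 1 - x0) by apply Rmin_r.
    apply Rabs_def2 in Hy. lra. }
  assert (H2 := is_derive_ext_loc _ _ _ _ Hl Hd).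
  assert (H3 : is_derive (fun _ : R => 0) x0 0) by (auto_derive; auto).
  apply is_derive_unique in H2. apply is_derive_unique in H3. congruence.
Qed.

Lemma nontrivial_of_deriv (u : R -> R) k : smooth u -> Derive_n u k 0 <> 0 -> nontrivial01 u.
Proof.
  intros Hs Hk. destruct (Classical_Prop.classic (nontrivial01 u)) as [|Hn]; auto. exfalso.
  assert (Hz : forall x, 0 < x < 1 -> u x = 0).
  { intros x Hx. destruct (Req_dec (u x) 0); auto. exfalso. apply Hn. exists x; auto. }
  assert (Hall : forall n x, 0 < x < 1 -> Derive_n u n x = 0).
  { induction n; intros x Hx. simpl; auto.
    apply (deriv_zero_open (Derive_n u n) x); auto. apply smooth_chain; auto. }
  apply Hk. apply edge. apply smooth_cont; auto. lra. intros; auto.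
Qed.

Definition ch (x : R) := (exp x + exp (- x)) / 2.
Definition sh (x : R) := (exp x - exp (- x)) / 2.

Record vec := mkV { va : R; vb : R; vc : R; vd : R; ve : R; vf : R }.

Definition P (s m : R) (p : vec) (x : R) :=
  va p + vb p * x + vc p * cos (s * x) + vd p * sin (s * x) + ve p * ch (m * x) + vf p * sh (m * x).

Definition D (s m : R) (p : vec) :=
  mkV (vb p) 0 (s * vd p) (- s * vc p) (m * vf p) (m * ve p).

Fixpoint Dn (s m : R) (k : nat) (p : vec) : vec :=
  match k with O => p | S k => D s m (Dn s m k p) end.

Lemma P_deriv s m p x : is_derive (P s m p) x (P s m (D s m p) x).
Proof. unfold P, D, ch, sh; simpl. auto_derive; auto. field. Qed.

Lemma P_Derive_n s m p k : forall x, Derive_n (P s m p) k x = P s m (Dn s m k p) x.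
Proof.
  induction k; intro x; simpl; auto.
  rewrite (Derive_ext _ _ x IHk). apply is_derive_unique. apply P_deriv.
Qed.

Lemma P_smooth s m p : smooth (P s m p).
Proof.
  intros k x. destruct k; simpl; auto.
  apply (ex_derive_ext (P s m (Dn s m k p))). intro; symmetry; apply P_Derive_n.
  eexists; apply P_deriv.
Qed.

Definition resid (u : R -> R) s m p k x := Derive_n u k x - P s m (Dn s m k p) x.

Lemma resid_chain u s m p k x : smooth u -> is_derive (resid u s m p k) x (resid u s m p (S k) x).
Proof. intro Hs. unfold resid. apply ID_minus. apply smooth_chain; auto. simpl. apply P_deriv. Qed.

Lemma resid_chain2 u s m p k : smooth u -> chain2 (resid u s m p k) (resid u s m p (S k)) (resid u s m p (S (S k))).
Proof. intro Hs; split; intro; apply resid_chain; auto. Qed.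

Lemma ch0 : ch 0 = 1. Proof. unfold ch. rewrite Ropp_0, exp_0. field. Qed.
Lemma sh0 : sh 0 = 0. Proof. unfold sh. rewrite Ropp_0, exp_0. field. Qed.

Lemma P_at0 s m p : P s m p 0 = va p + vc p + ve p.
Proof. unfold P. rewrite !Rmult_0_r, sin_0, cos_0, ch0, sh0. ring. Qed.
Lemma P_at1 s m p : P s m p 1 = va p + vb p + vc p * cos s + vd p * sin s + ve p * ch m + vf p * sh m.
Proof. unfold P. rewrite !Rmult_1_r. ring. Qed.

Lemma not_nontrivial_zero (u : R -> R) : nontrivial01 u -> ~ (forall x, 0 <= x <= 1 -> u x = 0).
Proof. intros [x [Hx Hu]] H. apply Hu, H; lra. Qed.

Lemma lap_char lam : lap_eig lam -> exists n : nat, lam = (INR (S n) * PI) ^ 2.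
Proof.
  intros [u [Hs [Hn [H0 [H1 Hode]]]]].
  set (f := Derive_n u).
  assert (Hc : forall k x, is_derive (f k) x (f (S k) x)) by (intros; apply smooth_chain; auto).
  destruct (Rle_dec lam 0) as [Hl|Hl].
  - exfalso.
    set (G := fun t => - (f 0%nat t * f 1%nat t)).
    assert (HG : forall x, is_derive G x (- (f 1%nat x * f 1%nat x + f 0%nat x * f 2%nat x))).
    { intro x. unfold G. apply is_derive_Reals, derivable_pt_lim_opp, is_derive_Reals. apply ID_mult; auto. }
    assert (Hneg : forall x, 0 < x < 1 -> - (f 1%nat x * f 1%nat x + f 0%nat x * f 2%nat x) <= 0).
    { intros x Hx. assert (f 2%nat x = - lam * f 0%nat x) by (unfold f; change (Derive_n u 0 x) with (u x); specialize (Hode x Hx); lra).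
      rewrite H. nra. }
    assert (HG0 : forall x, 0 <= x <= 1 -> G x = 0).
    { intros x Hx. assert (G x <= G 0) by (apply (mono_nonpos G _ 0 1 HG Hneg); lra).
      assert (G 1 <= G x) by (apply (mono_nonpos G _ 0 1 HG Hneg); lra).
      unfold G, f in *; simpl in *. rewrite H0 in H. rewrite H1 in H2. lra. }
    assert (Hf1 : forall x, 0 < x < 1 -> f 1%nat x = 0).
    { intros x Hx. assert (E := deriv_zero_open G x _ (fun y Hy => HG0 y (conj (Rlt_le _ _ (proj1 Hy)) (Rlt_le _ _ (proj2 Hy)))) Hx (HG x)).
      assert (f 2%nat x = - lam * f 0%nat x) by (unfold f; change (Derive_n u 0 x) with (u x); specialize (Hode x Hx); lra).
      rewrite H in E. nra. }
    apply (not_nontrivial_zero u Hn).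
    apply (first_order0 u (f 1%nat) 0).
    + intro x. apply (Hc 0%nat x).
    + intros x Hx. rewrite Hf1; auto; ring.
    + auto.
  - apply Rnot_le_lt in Hl.
    set (r := sqrt lam).
    assert (Hr : 0 < r) by (apply sqrt_lt_R0; auto).
    assert (Hrr : r * r = lam) by (apply sqrt_sqrt; lra).
    set (p := mkV 0 0 0 (f 1%nat 0 / r) 0 0).
    assert (Hz := L_osc _ _ _ r (resid_chain2 u r 0 p 0 Hs)).
    assert (Hz1 : forall x, 0 <= x <= 1 -> resid u r 0 p 0 x = 0 /\ resid u r 0 p 1 x = 0).
    { apply Hz.
      - intros x Hx. unfold resid; simpl. fold f.
        assert (f 2%nat x = - lam * f 0%nat x) by (unfold f; change (Derive_n u 0 x) with (u x); specialize (Hode x Hx); lra).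
        unfold f in H; simpl in H. rewrite H. rewrite <- Hrr. unfold P, D; simpl. ring.
      - unfold resid; rewrite P_at0; simpl. rewrite H0. ring.
      - unfold resid; rewrite P_at0; simpl. fold f. unfold p; simpl. change (Derive (fun x => u x) 0) with (f 1%nat 0). field. lra. }
    destruct (Hz1 1 ltac:(lra)) as [E1 _].
    unfold resid in E1; rewrite P_at1 in E1; simpl in E1. rewrite H1 in E1.
    assert (Hsin : sin r = 0).
    { destruct (Req_dec (f 1%nat 0) 0) as [Hd|Hd].
      - exfalso. apply (not_nontrivial_zero u Hn). intros x Hx.
        destruct (Hz1 x Hx) as [E _]. unfold resid, P in E; simpl in E. unfold p in E; simpl in E. fold f in E. rewrite Hd in E.
        lra.
      - assert (f 1%nat 0 / r <> 0). { unfold Rdiv. apply Rmult_integral_contrapositive; split; auto.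
          apply Rinv_neq_0_compat; lra. }
        fold f in E1. assert (f 1%nat 0 / r * sin r = 0) by lra.
        apply Rmult_integral in H2. destruct H2; auto. contradiction. }
    destruct (sin_eq_0_0 r Hsin) as [k Hk].
    assert (Hk1 : (1 <= k)%Z).
    { assert (0 < IZR k) by (assert (0 < PI) by apply PI_RGT_0; nra). apply lt_IZR in H. lia. }
    exists (Z.to_nat k - 1)%nat. rewrite <- Hrr. 
    replace (INR (S (Z.to_nat k - 1))) with (IZR k).
    + rewrite Hk. ring.
    + rewrite INR_IZR_INZ. f_equal. lia.
Qed.

Lemma lap_exists n : lap_eig ((INR (S n) * PI) ^ 2).
Proof.
  set (s := INR (S n) * PI). set (p := mkV 0 0 0 1 0 0).
  assert (Hs0 : s <> 0). { unfold s. apply Rmult_integral_contrapositive; split. apply not_0_INR; lia. apply PI_neq0. }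
  exists (P s 0 p). split; [apply P_smooth|]. split.
  { apply (nontrivial_of_deriv _ 1). apply P_smooth. rewrite P_Derive_n, P_at0. simpl. lra. }
  split. { rewrite P_at0; simpl; ring. }
  split. { rewrite P_at1; simpl. unfold s. rewrite sin_eq_0_1. ring. exists (Z.of_nat (S n)). rewrite <- INR_IZR_INZ; auto. }
  intros x Hx. rewrite P_Derive_n. unfold P; simpl. ring.
Qed.

Lemma lap_iff lam : lap_eig lam <-> exists k, lam = (INR (S k) * PI) ^ 2.
Proof. split. apply lap_char. intros [k ->]. apply lap_exists. Qed.

Lemma smono (e : nat -> R) : (forall n, e n < e (S n)) -> forall a b, (a < b)%nat -> e a < e b.
Proof.
  intros H a b Hab. induction Hab. apply H. apply Rlt_trans with (e m); auto.
Qed.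

Lemma smono_lt (e : nat -> R) : (forall n, e n < e (S n)) -> forall a b, e a < e b -> (a < b)%nat.
Proof.
  intros H a b Hab. destruct (Nat.lt_ge_cases a b) as [|Hge]; auto.
  exfalso. destruct (Nat.eq_dec a b) as [->|Hne]. lra.
  assert (e b < e a) by (apply smono; auto; lia). lra.
Qed.

Lemma in_L (e : nat -> R) k y : In y (map e (seq 0 k)) <-> exists i, (i < k)%nat /\ y = e i.
Proof.
  rewrite in_map_iff. split.
  - intros [i [<- Hi]]. apply in_seq in Hi. exists i; split; auto; lia.
  - intros [i [Hi ->]]. exists i; split; auto. apply in_seq; lia.
Qed.

Lemma nth_seq (E : R -> Prop) (e : nat -> R) : (forall n, e n < e (S n)) ->
  (forall y, E y <-> exists k, y = e k) -> forall j x, nth_eig E j x <-> x = e j.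
Proof.
  intros Hm HE j x. unfold nth_eig.
  assert (Hnd : forall k, NoDup (map e (seq 0 k))).
  { intro k. apply NoDup_map_NoDup_ForallPairs. 2: apply seq_NoDup.
    intros a b _ _ Hab. destruct (Nat.lt_trichotomy a b) as [H|[H|H]]; auto.
    - assert (e a < e b) by (apply smono; auto). lra.
    - assert (e b < e a) by (apply smono; auto). lra. }
  split.
  - intros [Hx [l [Hlen [Hnd' Hl]]]]. apply HE in Hx. destruct Hx as [k ->].
    assert (Hin : forall y, In y l <-> In y (map e (seq 0 k))).
    { intro y. rewrite Hl, in_L, HE. split.
      - intros [[i ->] Hi]. exists i; split; auto. apply (smono_lt e Hm); auto.
      - intros [i [Hi ->]]. split. exists i; auto. apply smono; auto. }
    assert (length l <= length (map e (seq 0 k)))%nat.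
    { apply NoDup_incl_length; auto. intros y Hy; apply Hin; auto. }
    assert (length (map e (seq 0 k)) <= length l)%nat.
    { apply NoDup_incl_length; auto. intros y Hy; apply Hin; auto. }
    rewrite length_map, length_seq in *. f_equal. lia.
  - intros ->. split. apply HE; eauto. exists (map e (seq 0 j)). split.
    rewrite length_map, length_seq; auto. split; auto.
    intro y. rewrite in_L, HE. split.
    + intros [i [Hi ->]]. split. eauto. apply smono; auto.
    + intros [[i ->] Hi]. exists i; split; auto. apply (smono_lt e Hm); auto.
Qed.

Definition wres u s m p k x := resid u s m p (S (S k)) x + s * s * resid u s m p k x.

Lemma wres_chain2 u s m p : smooth u -> chain2 (wres u s m p 0) (wres u s m p 1) (wres u s m p 2).
Proof.
  intro Hs. split; intro x; unfold wres; apply ID_plus; try apply ID_scal; apply resid_chain; auto.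
Qed.

Lemma buck_char sig : buck_eig sig -> 0 < sig /\
  sqrt sig * sin (sqrt sig) = 2 * (1 - cos (sqrt sig)).
Proof.
  intros [u [Hs [Hn [H0 [H0' [H1 [H1' Hode]]]]]]].
  set (f := Derive_n u).
  assert (Hc : forall k x, is_derive (f k) x (f (S k) x)) by (intros; apply smooth_chain; auto).
  destruct (Rle_dec sig 0) as [Hl|Hl].
  - exfalso.
    set (G := fun t => f 0%nat t * f 3%nat t - f 1%nat t * f 2%nat t + sig * (f 0%nat t * f 1%nat t)).
    assert (HG : forall x, is_derive G x ((f 1%nat x * f 3%nat x + f 0%nat x * f 4%nat x)
        - (f 2%nat x * f 2%nat x + f 1%nat x * f 3%nat x) + sig * (f 1%nat x * f 1%nat x + f 0%nat x * f 2%nat x))).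
    { intro x. unfold G. apply ID_plus. apply ID_minus; apply ID_mult; auto. apply ID_scal, ID_mult; auto. }
    assert (Hneg : forall x, 0 < x < 1 -> (f 1%nat x * f 3%nat x + f 0%nat x * f 4%nat x)
        - (f 2%nat x * f 2%nat x + f 1%nat x * f 3%nat x) + sig * (f 1%nat x * f 1%nat x + f 0%nat x * f 2%nat x) <= 0).
    { intros x Hx. assert (f 4%nat x = - sig * f 2%nat x) by (apply Hode; auto). rewrite H. nra. }
    assert (HG0 : forall x, 0 <= x <= 1 -> G x = 0).
    { intros x Hx. assert (G x <= G 0) by (apply (mono_nonpos G _ 0 1 HG Hneg); lra).
      assert (G 1 <= G x) by (apply (mono_nonpos G _ 0 1 HG Hneg); lra).
      assert (G 0 = 0) by (unfold G, f; simpl Derive_n at 1 3 5; rewrite H0; simpl in H0'; rewrite H0'; ring).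
      assert (G 1 = 0) by (unfold G, f; simpl Derive_n at 1 3 5; rewrite H1; simpl in H1'; rewrite H1'; ring).
      lra. }
    assert (Hf2 : forall x, 0 < x < 1 -> f 2%nat x = 0).
    { intros x Hx. assert (E := deriv_zero_open G x _ (fun y Hy => HG0 y (conj (Rlt_le _ _ (proj1 Hy)) (Rlt_le _ _ (proj2 Hy)))) Hx (HG x)).
      assert (f 4%nat x = - sig * f 2%nat x) by (apply Hode; auto).
      rewrite H in E. nra. }
    apply (not_nontrivial_zero u Hn). intros x Hx.
    refine (proj1 (L_osc (f 0%nat) (f 1%nat) (f 2%nat) 0 _ _ _ _ x Hx)).
    + split; auto.
    + intros y Hy. rewrite Hf2; auto; ring.
    + auto.
    + auto.
  - apply Rnot_le_lt in Hl.
    set (s := sqrt sig).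
    assert (Hr : 0 < s) by (apply sqrt_lt_R0; auto).
    assert (Hrr : s * s = sig) by (apply sqrt_sqrt; lra).
    set (c := - f 2%nat 0 / (s * s)). set (d := - f 3%nat 0 / (s * s * s)).
    set (p := mkV (- c) (- s * d) c d 0 0).
    assert (Hw : forall x, 0 <= x <= 1 -> wres u s 0 p 0 x = 0 /\ wres u s 0 p 1 x = 0).
    { apply (L_hyp _ _ _ 0 (wres_chain2 u s 0 p Hs)).
      - intros x Hx. unfold wres, resid. simpl Dn. fold f.
        assert (f 4%nat x = - sig * f 2%nat x) by (apply Hode; auto). rewrite H, <- Hrr.
        unfold P, D; simpl. ring.
      - unfold wres, resid. rewrite !P_at0. unfold p, c, d; cbn [Dn D va vb vc vd ve vf]. fold f.
        change (f 0%nat 0) with (u 0). rewrite H0. field. lra.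
      - unfold wres, resid. rewrite !P_at0. unfold p, c, d; cbn [Dn D va vb vc vd ve vf]. fold f.
        change (f 1%nat 0) with (Derive_n u 1 0). rewrite H0'. field. lra. }
    assert (Hz : forall x, 0 <= x <= 1 -> resid u s 0 p 0 x = 0 /\ resid u s 0 p 1 x = 0).
    { apply (L_osc _ _ _ s (resid_chain2 u s 0 p 0 Hs)).
      - intros x Hx. destruct (Hw x ltac:(lra)) as [E _]. unfold wres in E. lra.
      - unfold resid. rewrite P_at0. unfold p; cbn [Dn D va vb vc vd ve vf]. change (Derive_n u 0 0) with (u 0). rewrite H0. ring.
      - unfold resid. rewrite P_at0. unfold p, d; cbn [Dn D va vb vc vd ve vf]. rewrite H0'. field. lra. }
    destruct (Hz 1 ltac:(lra)) as [E1 E2].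
    unfold resid in E1, E2. rewrite P_at1 in E1, E2. cbn [Dn D va vb vc vd ve vf p] in E1, E2.
    change (Derive_n u 0 1) with (u 1) in E1. rewrite H1 in E1. rewrite H1' in E2.
    rewrite ?Rmult_0_l, ?Rmult_0_r in E1, E2.
    assert (Hcd : c <> 0 \/ d <> 0).
    { destruct (Req_dec c 0) as [Hc0|]; [|auto]. destruct (Req_dec d 0) as [Hd0|]; [|auto].
      exfalso. apply (not_nontrivial_zero u Hn). intros x Hx.
      destruct (Hz x Hx) as [E _]. unfold resid, P in E; cbn [Dn D va vb vc vd ve vf p] in E. rewrite Hc0, Hd0 in E.
      change (Derive_n u 0 x) with (u x) in E. lra. }
    split; auto. fold s.
    set (det := (cos s - 1) * (cos s - 1) + sin s * (sin s - s)).
    assert (E3 : d * (cos s - 1) - c * sin s = 0).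
    { apply Rmult_eq_reg_l with s; [|lra]. lra. }
    assert (E4 : c * (cos s - 1) + d * (sin s - s) = 0) by lra.
    assert (Hc1 : c * det = 0).
    { unfold det. replace (c * _) with ((cos s - 1) * (c * (cos s - 1) + d * (sin s - s)) - (sin s - s) * (d * (cos s - 1) - c * sin s)) by ring.
      rewrite E4, E3; ring. }
    assert (Hd1 : d * det = 0).
    { unfold det. replace (d * _) with (sin s * (c * (cos s - 1) + d * (sin s - s)) + (cos s - 1) * (d * (cos s - 1) - c * sin s)) by ring.
      rewrite E4, E3; ring. }
    assert (det = 0).
    { destruct Hcd as [Hc0|Hd0]. apply Rmult_integral in Hc1; tauto. apply Rmult_integral in Hd1; tauto. }
    unfold det in H. assert (sin s * sin s + cos s * cos s = 1) by (rewrite <- (sin2_cos2 s); unfold Rsqr; ring).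
    nra.
Qed.

Lemma ch_sh x : ch x * ch x - sh x * sh x = 1.
Proof.
  unfold ch, sh. assert (exp x * exp (- x) = 1) by (rewrite <- exp_plus; replace (x + - x) with 0 by ring; apply exp_0).
  nra.
Qed.

Lemma bilap_char Lam : bilap_eig Lam -> 0 < Lam /\
  cos (sqrt (sqrt Lam)) * ch (sqrt (sqrt Lam)) = 1.
Proof.
  intros [u [Hs [Hn [H0 [H0' [H1 [H1' Hode]]]]]]].
  set (f := Derive_n u).
  assert (Hc : forall k x, is_derive (f k) x (f (S k) x)) by (intros; apply smooth_chain; auto).
  destruct (Rle_dec Lam 0) as [Hl|Hl].
  - exfalso.
    set (G := fun t => f 0%nat t * f 3%nat t - f 1%nat t * f 2%nat t).
    assert (HG : forall x, is_derive G x ((f 1%nat x * f 3%nat x + f 0%nat x * f 4%nat x)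
        - (f 2%nat x * f 2%nat x + f 1%nat x * f 3%nat x))).
    { intro x. unfold G. apply ID_minus; apply ID_mult; auto. }
    assert (Hneg : forall x, 0 < x < 1 -> (f 1%nat x * f 3%nat x + f 0%nat x * f 4%nat x)
        - (f 2%nat x * f 2%nat x + f 1%nat x * f 3%nat x) <= 0).
    { intros x Hx. assert (f 4%nat x = Lam * f 0%nat x) by (apply Hode; auto). rewrite H. nra. }
    assert (HG0 : forall x, 0 <= x <= 1 -> G x = 0).
    { intros x Hx. assert (G x <= G 0) by (apply (mono_nonpos G _ 0 1 HG Hneg); lra).
      assert (G 1 <= G x) by (apply (mono_nonpos G _ 0 1 HG Hneg); lra).
      assert (G 0 = 0) by (unfold G; change (f 0%nat 0) with (u 0); change (f 1%nat 0) with (Derive_n u 1 0); rewrite H0, H0'; ring).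
      assert (G 1 = 0) by (unfold G; change (f 0%nat 1) with (u 1); change (f 1%nat 1) with (Derive_n u 1 1); rewrite H1, H1'; ring).
      lra. }
    assert (Hf2 : forall x, 0 < x < 1 -> f 2%nat x = 0).
    { intros x Hx. assert (E := deriv_zero_open G x _ (fun y Hy => HG0 y (conj (Rlt_le _ _ (proj1 Hy)) (Rlt_le _ _ (proj2 Hy)))) Hx (HG x)).
      assert (f 4%nat x = Lam * f 0%nat x) by (apply Hode; auto).
      rewrite H in E. nra. }
    apply (not_nontrivial_zero u Hn). intros x Hx.
    refine (proj1 (L_osc (f 0%nat) (f 1%nat) (f 2%nat) 0 _ _ _ _ x Hx)).
    + split; auto.
    + intros y Hy. rewrite Hf2; auto; ring.
    + auto.
    + auto.
  - apply Rnot_le_lt in Hl.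
    set (s := sqrt (sqrt Lam)).
    assert (Hq : 0 < sqrt Lam) by (apply sqrt_lt_R0; auto).
    assert (Hr : 0 < s) by (apply sqrt_lt_R0; auto).
    assert (Hrr : s * s = sqrt Lam) by (apply sqrt_sqrt; lra).
    assert (Hr4 : s * s * (s * s) = Lam) by (rewrite Hrr; apply sqrt_sqrt; lra).
    set (a := f 2%nat 0 / (2 * (s * s))). set (b := f 3%nat 0 / (2 * (s * s * s))).
    set (p := mkV 0 0 (- a) (- b) a b).
    assert (Hw : forall x, 0 <= x <= 1 -> wres u s s p 0 x = 0 /\ wres u s s p 1 x = 0).
    { apply (L_hyp _ _ _ s (wres_chain2 u s s p Hs)).
      - intros x Hx. unfold wres, resid. simpl Dn. fold f.
        assert (f 4%nat x = Lam * f 0%nat x) by (apply Hode; auto). rewrite H, <- Hr4.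
        unfold P, D; simpl. ring.
      - unfold wres, resid. rewrite !P_at0. unfold p, a, b; cbn [Dn D va vb vc vd ve vf]. fold f.
        change (f 0%nat 0) with (u 0). rewrite H0. field. lra.
      - unfold wres, resid. rewrite !P_at0. unfold p, a, b; cbn [Dn D va vb vc vd ve vf]. fold f.
        change (f 1%nat 0) with (Derive_n u 1 0). rewrite H0'. field. lra. }
    assert (Hz : forall x, 0 <= x <= 1 -> resid u s s p 0 x = 0 /\ resid u s s p 1 x = 0).
    { apply (L_osc _ _ _ s (resid_chain2 u s s p 0 Hs)).
      - intros x Hx. destruct (Hw x ltac:(lra)) as [E _]. unfold wres in E. lra.
      - unfold resid. rewrite P_at0. unfold p; cbn [Dn D va vb vc vd ve vf]. change (Derive_n u 0 0) with (u 0). rewrite H0. ring.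
      - unfold resid. rewrite P_at0. unfold p; cbn [Dn D va vb vc vd ve vf]. rewrite H0'. ring. }
    destruct (Hz 1 ltac:(lra)) as [E1 E2].
    unfold resid in E1, E2. rewrite P_at1 in E1, E2. cbn [Dn D va vb vc vd ve vf p] in E1, E2.
    change (Derive_n u 0 1) with (u 1) in E1. rewrite H1 in E1. rewrite H1' in E2.
    assert (Hab : a <> 0 \/ b <> 0).
    { destruct (Req_dec a 0) as [Ha0|]; [|auto]. destruct (Req_dec b 0) as [Hb0|]; [|auto].
      exfalso. apply (not_nontrivial_zero u Hn). intros x Hx.
      destruct (Hz x Hx) as [E _]. unfold resid, P in E; cbn [Dn D va vb vc vd ve vf p] in E. rewrite Ha0, Hb0 in E.
      change (Derive_n u 0 x) with (u x) in E. lra. }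
    split; auto. fold s.
    set (C := ch s). set (S := sh s). set (co := cos s). set (si := sin s).
    assert (E4 : a * (C - co) + b * (S - si) = 0) by (unfold C, S, co, si; lra).
    assert (E3 : a * (S + si) + b * (C - co) = 0).
    { apply Rmult_eq_reg_l with s; [|lra]. unfold C, S, co, si. lra. }
    set (det := (C - co) * (C - co) - (S - si) * (S + si)).
    assert (Hc1 : a * det = 0).
    { unfold det. replace (a * _) with ((C - co) * (a * (C - co) + b * (S - si)) - (S - si) * (a * (S + si) + b * (C - co))) by ring.
      rewrite E4, E3; ring. }
    assert (Hd1 : b * det = 0).
    { unfold det. replace (b * _) with ((C - co) * (a * (S + si) + b * (C - co)) - (S + si) * (a * (C - co) + b * (S - si))) by ring.
      rewrite E4, E3; ring. }
    assert (det = 0).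
    { destruct Hab as [Hc0|Hd0]. apply Rmult_integral in Hc1; tauto. apply Rmult_integral in Hd1; tauto. }
    unfold det in H. assert (si * si + co * co = 1) by (unfold si, co; rewrite <- (sin2_cos2 s); unfold Rsqr; ring).
    assert (C * C - S * S = 1) by apply ch_sh.
    fold co. fold C. nra.
Qed.

Lemma ch_gt1 x : x <> 0 -> 1 < ch x.
Proof.
  intro H. unfold ch. assert (1 + x < exp x) by (apply exp_ineq1; auto).
  assert (1 + - x < exp (- x)) by (apply exp_ineq1; lra). lra.
Qed.

Lemma buck_exists s : 0 < s -> s * sin s = 2 * (1 - cos s) -> buck_eig (s * s).
Proof.
  intros Hs Hch.
  set (c := sin s - s). set (d := 1 - cos s).
  set (p := mkV (- c) (- s * d) c d 0 0).
  assert (Hc : c <> 0) by (unfold c; assert (sin s < s) by (apply sin_lt_x; auto); lra).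
  assert (Hsc : sin s * sin s + cos s * cos s = 1) by (rewrite <- (sin2_cos2 s); unfold Rsqr; ring).
  exists (P s 0 p). split; [apply P_smooth|]. split.
  { apply (nontrivial_of_deriv _ 2). apply P_smooth. rewrite P_Derive_n, P_at0. unfold p; cbn [Dn D va vb vc vd ve vf].
    intro E. apply Hc. apply Rmult_eq_reg_l with (- s * s). lra. nra. }
  split. { rewrite P_at0; unfold p; cbn [va vb vc vd ve vf]; ring. }
  split. { rewrite P_Derive_n, P_at0; unfold p; cbn [Dn D va vb vc vd ve vf]; ring. }
  split. { rewrite P_at1; unfold p, c, d; cbn [va vb vc vd ve vf]; ring. }
  split. { rewrite P_Derive_n, P_at1; unfold p, c, d; cbn [Dn D va vb vc vd ve vf]. nra. }
  intros x Hx. rewrite !P_Derive_n. unfold P; cbn [Dn D va vb vc vd ve vf]. ring.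
Qed.

Lemma bilap_exists s : 0 < s -> cos s * ch s = 1 -> bilap_eig (s * s * (s * s)).
Proof.
  intros Hs Hch.
  set (a := sh s - sin s). set (b := - (ch s - cos s)).
  set (p := mkV 0 0 (- a) (- b) a b).
  assert (Hb : b <> 0) by (unfold b; assert (1 < ch s) by (apply ch_gt1; lra);
     assert (cos s <= 1) by apply COS_bound; lra).
  assert (Hsc : sin s * sin s + cos s * cos s = 1) by (rewrite <- (sin2_cos2 s); unfold Rsqr; ring).
  assert (Hcs := ch_sh s).
  exists (P s s p). split; [apply P_smooth|]. split.
  { apply (nontrivial_of_deriv _ 3). apply P_smooth. rewrite P_Derive_n, P_at0. unfold p; cbn [Dn D va vb vc vd ve vf].
    intro E. apply Hb. assert (s * s * s * b = 0) by lra.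
    assert (0 < s * s * s) by (apply Rmult_lt_0_compat; auto; apply Rmult_lt_0_compat; auto). nra. }
  split. { rewrite P_at0; unfold p; cbn [va vb vc vd ve vf]; ring. }
  split. { rewrite P_Derive_n, P_at0; unfold p; cbn [Dn D va vb vc vd ve vf]; ring. }
  split. { rewrite P_at1; unfold p, a, b; cbn [va vb vc vd ve vf]; ring. }
  split. { rewrite P_Derive_n, P_at1; unfold p, a, b; cbn [Dn D va vb vc vd ve vf]. nra. }
  intros x Hx. rewrite !P_Derive_n. unfold P, p; cbn [Dn D va vb vc vd ve vf]. ring.
Qed.

Lemma inj_of_deriv (f df : R -> R) a b : (forall x, is_derive f x (df x)) ->
  (forall x, a < x < b -> df x <> 0) ->
  forall x y, a <= x <= b -> a <= y <= b -> f x = f y -> x = y.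
Proof.
  intros Hd Hn x y Hx Hy E.
  destruct (Rtotal_order x y) as [H|[H|H]]; auto; exfalso.
  - destruct (mvt f df x y Hd H) as [c [Hc Ec]].
    assert (df c = 0). { apply Rmult_eq_reg_r with (y - x). lra. lra. } apply (Hn c); auto; lra.
  - destruct (mvt f df y x Hd H) as [c [Hc Ec]].
    assert (df c = 0). { apply Rmult_eq_reg_r with (x - y). lra. lra. } apply (Hn c); auto; lra.
Qed.

Lemma root_between (f df : R -> R) a b : (forall x, is_derive f x (df x)) -> a < b -> f a * f b < 0 ->
  {x | a < x < b /\ f x = 0}.
Proof.
  intros Hd Hab Hs.
  assert (Hc : continuity f) by (intro x; apply cont_of_ex_derive; eexists; apply Hd).
  destruct (IVT_gen f a b 0 Hc) as [x [Hx Ex]].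
  - split. apply Rle_trans with (Rmin (f a) (f b)). right; auto. unfold Rmin; destruct Rle_dec; nra.
    unfold Rmax; destruct Rle_dec; nra.
  - exists x. rewrite Rmin_left in Hx by lra. rewrite Rmax_right in Hx by lra.
    split; auto. destruct (Req_dec x a) as [->|]. rewrite Ex in Hs; lra.
    destruct (Req_dec x b) as [->|]. rewrite Ex in Hs; lra. lra.
Qed.

Lemma sin_kpi k : sin (INR k * PI) = 0.
Proof. apply sin_eq_0_1. exists (Z.of_nat k). rewrite <- INR_IZR_INZ; auto. Qed.

Lemma cos_kpi2 k : cos (INR k * PI) * cos (INR k * PI) = 1.
Proof. assert (H := sin2_cos2 (INR k * PI)). rewrite sin_kpi in H. unfold Rsqr in H. lra. Qed.

Lemma sin_shift k x : sin (INR k * PI + x) = cos (INR k * PI) * sin x.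
Proof. rewrite sin_plus, sin_kpi. ring. Qed.
Lemma cos_shift k x : cos (INR k * PI + x) = cos (INR k * PI) * cos x.
Proof. rewrite cos_plus, sin_kpi. ring. Qed.
Lemma sin_shiftm k x : sin (INR k * PI - x) = - cos (INR k * PI) * sin x.
Proof. unfold Rminus. rewrite sin_plus, sin_kpi, sin_neg, cos_neg. ring. Qed.
Lemma cos_shiftm k x : cos (INR k * PI - x) = cos (INR k * PI) * cos x.
Proof. unfold Rminus. rewrite cos_plus, sin_kpi, sin_neg, cos_neg. ring. Qed.

Lemma PI_gt3 : 3 < PI.
Proof. assert (H := PI2_3_2). lra. Qed.

Lemma sin_nz k t : INR k * PI < t < INR (S k) * PI -> sin t <> 0.
Proof.
  intros Ht E. destruct (sin_eq_0_0 t E) as [z ->].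
  assert (HP := PI_RGT_0). rewrite S_INR in Ht.
  assert (INR k < IZR z < INR k + 1) by (split; nra).
  rewrite INR_IZR_INZ in H. rewrite <- plus_IZR in H. destruct H as [H1 H2].
  apply lt_IZR in H1. apply lt_IZR in H2. lia.
Qed.

Lemma cos_nz k t : INR k * PI - PI / 2 < t < INR k * PI + PI / 2 -> cos t <> 0.
Proof.
  intros Ht E. destruct (cos_eq_0_0 t E) as [z ->].
  assert (HP := PI_RGT_0).
  assert (INR k - 1 < IZR z < INR k) by (split; nra).
  rewrite INR_IZR_INZ in H. rewrite <- minus_IZR in H. destruct H as [H1 H2].
  apply lt_IZR in H1. apply lt_IZR in H2. lia.
Qed.

Lemma floor_pi y : 0 <= y -> exists k : nat, INR k * PI <= y < INR (S k) * PI.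
Proof.
  intro Hy. assert (HP := PI_RGT_0).
  destruct (archimed (y / PI)) as [H1 H2].
  assert (Hz : (1 <= up (y / PI))%Z).
  { assert (0 <= y / PI) by (apply Rmult_le_pos; auto; left; apply Rinv_0_lt_compat; auto).
    assert (0 < IZR (up (y / PI))) by lra. apply lt_IZR in H0. lia. }
  exists (Z.to_nat (up (y / PI) - 1)).
  assert (E : INR (Z.to_nat (up (y / PI) - 1)) = IZR (up (y / PI)) - 1).
  { rewrite INR_IZR_INZ, Znat.Z2Nat.id by lia. rewrite minus_IZR. auto. }
  rewrite S_INR, E.
  assert (y / PI * PI = y) by (field; lra).
  split; nra.
Qed.

Lemma sh_pos t : 0 < t -> 0 < sh t.
Proof. intro H. unfold sh. assert (exp (- t) < exp t) by (apply exp_increasing; lra). lra. Qed.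
Lemma ch_pos t : 0 < ch t.
Proof. unfold ch. assert (0 < exp t) by apply exp_pos. assert (0 < exp (- t)) by apply exp_pos. lra. Qed.

Definition gB t := sin t - t * cos t.
Definition h1 t := sin t * ch t - cos t * sh t.
Definition h2 t := sin t * ch t + cos t * sh t.

Lemma gB_deriv t : is_derive gB t (t * sin t).
Proof. unfold gB. auto_derive; auto. ring. Qed.
Lemma h1_deriv t : is_derive h1 t (2 * sin t * sh t).
Proof. unfold h1, ch, sh. auto_derive; auto. field. Qed.
Lemma h2_deriv t : is_derive h2 t (2 * cos t * ch t).
Proof. unfold h2, ch, sh. auto_derive; auto. field. Qed.

Lemma kpi_pos n : 0 < INR (S n) * PI.
Proof. apply Rmult_lt_0_compat. apply lt_0_INR; lia. apply PI_RGT_0. Qed.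

Lemma tB_ex n : {x | INR (S n) * PI < x < INR (S n) * PI + PI / 2 /\ gB x = 0}.
Proof.
  apply (root_between gB (fun t => t * sin t)). apply gB_deriv. assert (HP := PI_RGT_0); lra.
  unfold gB. rewrite sin_kpi, sin_shift, cos_shift, sin_PI2, cos_PI2.
  assert (H := cos_kpi2 (S n)). assert (H2 := kpi_pos n). nra.
Qed.
Definition tB n := proj1_sig (tB_ex n).
Lemma tB_spec n : INR (S n) * PI < tB n < INR (S n) * PI + PI / 2 /\ gB (tB n) = 0.
Proof. unfold tB. destruct (tB_ex n); auto. Qed.

Lemma B_ex n : {x | INR (S n) * PI < x < INR (S n) * PI + PI / 2 /\ h1 x = 0}.
Proof.
  apply (root_between h1 (fun t => 2 * sin t * sh t)). apply h1_deriv. assert (HP := PI_RGT_0); lra.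
  unfold h1. rewrite sin_kpi, sin_shift, cos_shift, sin_PI2, cos_PI2.
  assert (H := cos_kpi2 (S n)). assert (H2 := kpi_pos n).
  assert (H3 := sh_pos _ H2). assert (H4 := ch_pos (INR (S n) * PI + PI / 2)).
  assert (0 < sh (INR (S n) * PI) * ch (INR (S n) * PI + PI / 2)) by (apply Rmult_lt_0_compat; auto).
  nra.
Qed.
Definition Bt n := proj1_sig (B_ex n).
Lemma Bt_spec n : INR (S n) * PI < Bt n < INR (S n) * PI + PI / 2 /\ h1 (Bt n) = 0.
Proof. unfold Bt. destruct (B_ex n); auto. Qed.

Lemma A_ex n : {x | INR (S n) * PI - PI / 2 < x < INR (S n) * PI /\ h2 x = 0}.
Proof.
  apply (root_between h2 (fun t => 2 * cos t * ch t)). apply h2_deriv. assert (HP := PI_RGT_0); lra.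
  unfold h2. rewrite sin_kpi, sin_shiftm, cos_shiftm, sin_PI2, cos_PI2.
  assert (H := cos_kpi2 (S n)). assert (H2 := kpi_pos n).
  assert (H3 := sh_pos _ H2). assert (H4 := ch_pos (INR (S n) * PI - PI / 2)).
  assert (0 < sh (INR (S n) * PI) * ch (INR (S n) * PI - PI / 2)) by (apply Rmult_lt_0_compat; auto).
  nra.
Qed.
Definition At n := proj1_sig (A_ex n).
Lemma At_spec n : INR (S n) * PI - PI / 2 < At n < INR (S n) * PI /\ h2 (At n) = 0.
Proof. unfold At. destruct (A_ex n); auto. Qed.

Lemma buck_t_class t : 0 < t -> sin t * gB t = 0 ->
  (exists n, t = INR (S n) * PI) \/ (exists n, t = tB n).
Proof.
  intros Ht E. assert (HP := PI_RGT_0).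
  destruct (Req_dec (sin t) 0) as [Hs|Hs].
  - left. destruct (sin_eq_0_0 t Hs) as [z Hz].
    assert (1 <= z)%Z. { assert (0 < IZR z) by nra. apply lt_IZR in H. lia. }
    exists (Z.to_nat z - 1)%nat. rewrite Hz. f_equal. rewrite INR_IZR_INZ. f_equal. lia.
  - right. assert (Hg : gB t = 0). { apply Rmult_integral in E. destruct E; auto. contradiction. }
    destruct (floor_pi t) as [k Hk]; [lra|].
    assert (Hk' : INR k * PI < t).
    { destruct Hk as [[H|H] _]; auto. subst t. rewrite sin_kpi in Hs. contradiction. }
    destruct k as [|n].
    + exfalso. assert (t = 0); [|lra].
      apply (inj_of_deriv gB (fun t => t * sin t) 0 PI gB_deriv).
      * intros x Hx. apply Rmult_integral_contrapositive; split. lra. apply (sin_nz 0). simpl; lra.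
      * simpl in Hk; lra.
      * lra.
      * unfold gB in *. rewrite Hg, sin_0, cos_0. ring.
    + exists n. destruct (tB_spec n) as [HtB HgB].
      apply (inj_of_deriv gB (fun t => t * sin t) (INR (S n) * PI) (INR (S (S n)) * PI) gB_deriv).
      * intros x Hx. apply Rmult_integral_contrapositive; split. assert (0 < INR (S n) * PI) by apply kpi_pos. lra.
        apply (sin_nz (S n)); auto.
      * lra.
      * rewrite (S_INR (S n)). lra.
      * rewrite Hg, HgB; auto.
Qed.

Lemma h1_kpi k : h1 (INR k * PI) = - cos (INR k * PI) * sh (INR k * PI).
Proof. unfold h1. rewrite sin_kpi. ring. Qed.

Lemma bilap_t_class t : 0 < t -> h1 t * h2 t = 0 ->
  (exists n, t = At n) \/ (exists n, t = Bt n).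
Proof.
  intros Ht E. assert (HP := PI_RGT_0).
  apply Rmult_integral in E. destruct E as [E|E].
  - right. destruct (floor_pi t) as [k Hk]; [lra|].
    assert (Hk' : INR k * PI < t).
    { destruct Hk as [[H|H] _]; auto. subst t. exfalso. rewrite h1_kpi in E.
      assert (0 < sh (INR k * PI)) by (apply sh_pos; auto).
      assert (Hc := cos_kpi2 k). nra. }
    destruct k as [|n].
    + exfalso. assert (t = 0); [|lra].
      apply (inj_of_deriv h1 (fun t => 2 * sin t * sh t) 0 PI h1_deriv).
      * intros x Hx. assert (0 < sh x) by (apply sh_pos; lra). assert (sin x <> 0) by (apply (sin_nz 0); simpl; lra).
        intro Z. apply Rmult_integral in Z. destruct Z as [Z|Z]; [|lra]. apply Rmult_integral in Z; destruct Z; lra.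
      * simpl in Hk; lra.
      * lra.
      * rewrite E. unfold h1. rewrite sin_0, cos_0, sh0. ring.
    + exists n. destruct (Bt_spec n) as [HB HhB].
      apply (inj_of_deriv h1 (fun t => 2 * sin t * sh t) (INR (S n) * PI) (INR (S (S n)) * PI) h1_deriv).
      * intros x Hx. assert (0 < INR (S n) * PI) by apply kpi_pos. assert (0 < sh x) by (apply sh_pos; lra).
        assert (sin x <> 0) by (apply (sin_nz (S n)); auto).
        intro Z. apply Rmult_integral in Z. destruct Z as [Z|Z]; [|lra]. apply Rmult_integral in Z; destruct Z; lra.
      * lra.
      * rewrite (S_INR (S n)). lra.
      * rewrite E, HhB; auto.
  - left. destruct (floor_pi (t + PI / 2)) as [k Hk]; [lra|].
    assert (Hk' : INR k * PI - PI / 2 < t).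
    { destruct Hk as [[H|H] _]; [lra|]. exfalso.
      assert (t = INR k * PI - PI / 2) by lra. subst t.
      unfold h2 in E. rewrite sin_shiftm, cos_shiftm, sin_PI2, cos_PI2 in E.
      assert (0 < ch (INR k * PI - PI / 2)) by apply ch_pos.
      assert (Hc := cos_kpi2 k). nra. }
    rewrite S_INR in Hk.
    destruct k as [|n].
    + exfalso. assert (t = 0); [|lra].
      apply (inj_of_deriv h2 (fun t => 2 * cos t * ch t) (- (PI / 2)) (PI / 2) h2_deriv).
      * intros x Hx. assert (0 < ch x) by apply ch_pos. assert (cos x <> 0) by (apply (cos_nz 0); simpl; lra).
        intro Z. apply Rmult_integral in Z. destruct Z as [Z|Z]; [|lra]. apply Rmult_integral in Z; destruct Z; lra.
      * simpl in Hk, Hk'; lra.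
      * lra.
      * rewrite E. unfold h2. rewrite sin_0, cos_0, sh0. ring.
    + exists n. destruct (At_spec n) as [HA HhA].
      apply (inj_of_deriv h2 (fun t => 2 * cos t * ch t) (INR (S n) * PI - PI / 2) (INR (S n) * PI + PI / 2) h2_deriv).
      * intros x Hx. assert (0 < ch x) by apply ch_pos.
        assert (cos x <> 0) by (apply (cos_nz (S n)); auto).
        intro Z. apply Rmult_integral in Z. destruct Z as [Z|Z]; [|lra]. apply Rmult_integral in Z; destruct Z; lra.
      * lra.
      * lra.
      * rewrite E, HhA; auto.
Qed.

Definition tauB k := if Nat.even k then INR (S (Nat.div2 k)) * PI else tB (Nat.div2 k).
Definition tauA k := if Nat.even k then At (Nat.div2 k) else Bt (Nat.div2 k).

Lemma tauB_even n : tauB (2 * n) = INR (S n) * PI.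
Proof. unfold tauB. rewrite Nat.even_even, Nat.div2_double. auto. Qed.
Lemma tauB_odd n : tauB (2 * n + 1) = tB n.
Proof. unfold tauB. rewrite Nat.even_odd, Nat.div2_odd'. auto. Qed.
Lemma tauA_even n : tauA (2 * n) = At n.
Proof. unfold tauA. rewrite Nat.even_even, Nat.div2_double. auto. Qed.
Lemma tauA_odd n : tauA (2 * n + 1) = Bt n.
Proof. unfold tauA. rewrite Nat.even_odd, Nat.div2_odd'. auto. Qed.

Lemma tauB_pos k : 0 < tauB k.
Proof.
  destruct (Nat.Even_or_Odd k) as [[n ->]|[n ->]].
  rewrite tauB_even. apply kpi_pos. rewrite tauB_odd. destruct (tB_spec n). assert (H1 := kpi_pos n). lra.
Qed.
Lemma tauA_pos k : 0 < tauA k.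
Proof.
  assert (HP := PI_RGT_0).
  destruct (Nat.Even_or_Odd k) as [[n ->]|[n ->]].
  rewrite tauA_even. destruct (At_spec n). assert (1 <= INR (S n)) by (rewrite S_INR; assert (0 <= INR n) by apply pos_INR; lra). nra.
  rewrite tauA_odd. destruct (Bt_spec n). assert (H1 := kpi_pos n). lra.
Qed.

Lemma tauB_step k : tauB k < tauB (S k).
Proof.
  assert (HP := PI_RGT_0).
  destruct (Nat.Even_or_Odd k) as [[n ->]|[n ->]].
  - replace (S (2 * n)) with (2 * n + 1)%nat by lia. rewrite tauB_even, tauB_odd. apply tB_spec.
  - replace (S (2 * n + 1)) with (2 * S n)%nat by lia. rewrite tauB_even, tauB_odd.
    destruct (tB_spec n). rewrite (S_INR (S n)). lra.
Qed.
Lemma tauA_step k : tauA k < tauA (S k).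
Proof.
  assert (HP := PI_RGT_0).
  destruct (Nat.Even_or_Odd k) as [[n ->]|[n ->]].
  - replace (S (2 * n)) with (2 * n + 1)%nat by lia. rewrite tauA_even, tauA_odd.
    destruct (At_spec n). destruct (Bt_spec n). lra.
  - replace (S (2 * n + 1)) with (2 * S n)%nat by lia. rewrite tauA_even, tauA_odd.
    destruct (At_spec (S n)). destruct (Bt_spec n). rewrite (S_INR (S n)) in *. lra.
Qed.

Definition eL k := (INR (S k) * PI) ^ 2.
Definition eB k := (2 * tauB k) * (2 * tauB k).
Definition eA k := (2 * tauA k) * (2 * tauA k) * ((2 * tauA k) * (2 * tauA k)).

Lemma eL_step k : eL k < eL (S k).
Proof. unfold eL. assert (HP := PI_RGT_0). rewrite (S_INR (S k)). assert (H := kpi_pos k). nra. Qed.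
Lemma eB_step k : eB k < eB (S k).
Proof. unfold eB. assert (H := tauB_step k). assert (H2 := tauB_pos k). nra. Qed.
Lemma eA_step k : eA k < eA (S k).
Proof. unfold eA. assert (H := tauA_step k). assert (H2 := tauA_pos k).
  set (a := 2 * tauA k). set (b := 2 * tauA (S k)).
  assert (0 < a) by (unfold a; lra). assert (a < b) by (unfold a, b; lra).
  assert (a * a < b * b) by nra. assert (0 < a * a) by nra. nra. Qed.

Lemma ch2 t : ch (2 * t) = ch t * ch t + sh t * sh t.
Proof.
  unfold ch, sh. replace (2 * t) with (t + t) by ring. replace (- (t + t)) with (- t + - t) by ring.
  rewrite !exp_plus. assert (exp t * exp (- t) = 1) by (rewrite <- exp_plus; replace (t + - t) with 0 by ring; apply exp_0).
  nra.
Qed.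

Lemma buck_iff sig : buck_eig sig <-> exists k, sig = eB k.
Proof.
  split.
  - intro H. destruct (buck_char sig H) as [Hp Hc].
    set (s := sqrt sig) in Hc. assert (Hs : 0 < s) by (apply sqrt_lt_R0; auto).
    assert (Hss : s * s = sig) by (apply sqrt_sqrt; lra).
    set (t := s / 2). assert (Ht : 0 < t) by (unfold t; lra).
    assert (Hst : s = 2 * t) by (unfold t; field).
    rewrite Hst, sin_2a, cos_2a_sin in Hc.
    assert (E : sin t * gB t = 0) by (unfold gB; nra).
    destruct (buck_t_class t Ht E) as [[n Hn]|[n Hn]].
    + exists (2 * n)%nat. unfold eB. rewrite tauB_even, <- Hn, <- Hss, Hst. ring.
    + exists (2 * n + 1)%nat. unfold eB. rewrite tauB_odd, <- Hn, <- Hss, Hst. ring.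
  - intros [k ->]. unfold eB. apply buck_exists. assert (H := tauB_pos k); lra.
    rewrite sin_2a, cos_2a_sin.
    assert (E : sin (tauB k) * gB (tauB k) = 0).
    { destruct (Nat.Even_or_Odd k) as [[n ->]|[n ->]].
      rewrite tauB_even, sin_kpi. ring. rewrite tauB_odd. destruct (tB_spec n) as [_ ->]. ring. }
    unfold gB in E. nra.
Qed.

Lemma cosch_id t : cos (2 * t) * ch (2 * t) - 1 = - 2 * h1 t * h2 t.
Proof.
  rewrite cos_2a, ch2. unfold h1, h2.
  assert (H1 : sin t * sin t + cos t * cos t = 1) by (rewrite <- (sin2_cos2 t); unfold Rsqr; ring).
  assert (H2 := ch_sh t).
  transitivity ((cos t * cos t - sin t * sin t) * (ch t * ch t + sh t * sh t) - (sin t * sin t + cos t * cos t) * (ch t * ch t - sh t * sh t)).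
  rewrite H1, H2; ring. ring.
Qed.

Lemma bilap_iff Lam : bilap_eig Lam <-> exists k, Lam = eA k.
Proof.
  split.
  - intro H. destruct (bilap_char Lam H) as [Hp Hc].
    set (s := sqrt (sqrt Lam)) in Hc.
    assert (Hq : 0 < sqrt Lam) by (apply sqrt_lt_R0; auto).
    assert (Hs : 0 < s) by (apply sqrt_lt_R0; auto).
    assert (Hrr : s * s = sqrt Lam) by (apply sqrt_sqrt; lra).
    assert (Hr4 : s * s * (s * s) = Lam) by (rewrite Hrr; apply sqrt_sqrt; lra).
    set (t := s / 2). assert (Ht : 0 < t) by (unfold t; lra).
    assert (Hst : s = 2 * t) by (unfold t; field).
    assert (E : h1 t * h2 t = 0). { assert (H' := cosch_id t). rewrite <- Hst in H'. lra. }
    destruct (bilap_t_class t Ht E) as [[n Hn]|[n Hn]].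
    + exists (2 * n)%nat. unfold eA. rewrite tauA_even, <- Hn, <- Hst. auto.
    + exists (2 * n + 1)%nat. unfold eA. rewrite tauA_odd, <- Hn, <- Hst. auto.
  - intros [k ->]. unfold eA. apply bilap_exists. assert (H := tauA_pos k); lra.
    assert (E : h1 (tauA k) * h2 (tauA k) = 0).
    { destruct (Nat.Even_or_Odd k) as [[n ->]|[n ->]].
      rewrite tauA_even. destruct (At_spec n) as [_ ->]. ring.
      rewrite tauA_odd. destruct (Bt_spec n) as [_ ->]. ring. }
    assert (H' := cosch_id (tauA k)). lra.
Qed.

Lemma key_bound x t : 0 < x < PI / 2 -> 0 < t -> sin x * ch t = cos x * sh t ->
  x < PI / 4 /\ PI / 4 - x <= 2 / (exp t * exp t).
Proof.
  intros Hx Ht E. assert (HP := PI_RGT_0).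
  assert (Hc : 0 < cos x) by (apply cos_gt_0; lra).
  assert (Hs : 0 < sin x) by (apply sin_gt_0; lra).
  assert (Hch : 0 < ch t) by apply ch_pos.
  assert (Hsc : sh t < ch t) by (unfold sh, ch; assert (0 < exp (- t)) by apply exp_pos; lra).
  assert (Hlt : sin x < cos x).
  { apply Rmult_lt_reg_r with (ch t); auto. rewrite E. apply Rmult_lt_compat_l; auto. }
  set (phi := fun y => cos y - sin y).
  assert (Hd : forall y, is_derive phi y (- (sin y + cos y))) by (intro y; unfold phi; auto_derive; auto; ring).
  assert (Hpi4 : phi (PI / 4) = 0) by (unfold phi; rewrite cos_PI4, sin_PI4; ring).
  assert (Hsum : forall c, 0 < c < PI / 2 -> 1 <= sin c + cos c).
  { intros c Hc'. assert (0 < cos c) by (apply cos_gt_0; lra). assert (0 < sin c) by (apply sin_gt_0; lra).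
    assert (sin c * sin c + cos c * cos c = 1) by (rewrite <- (sin2_cos2 c); unfold Rsqr; ring). nra. }
  assert (Hx4 : x < PI / 4).
  { destruct (Rtotal_order x (PI / 4)) as [H|[H|H]]; auto; exfalso.
    - subst x. unfold phi in Hpi4. lra.
    - destruct (mvt phi _ (PI / 4) x Hd H) as [c [Hc' Ec]].
      assert (1 <= sin c + cos c) by (apply Hsum; lra). unfold phi in Ec, Hpi4. nra. }
  split; auto.
  destruct (mvt phi _ x (PI / 4) Hd Hx4) as [c [Hc' Ec]].
  assert (1 <= sin c + cos c) by (apply Hsum; lra).
  assert (Hphi : PI / 4 - x <= cos x - sin x).
  { unfold phi in Ec, Hpi4. assert (0 <= (sin c + cos c - 1) * (PI / 4 - x)) by (apply Rmult_le_pos; lra). nra. }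
  assert (Hem : exp (- t) * exp t = 1) by (rewrite <- exp_plus; replace (- t + t) with 0 by ring; apply exp_0).
  assert (He : 0 < exp t) by apply exp_pos.
  assert (Hme : 0 < exp (- t)) by apply exp_pos.
  assert (E2 : (cos x - sin x) * ch t = cos x * exp (- t)).
  { unfold ch, sh in *. nra. }
  assert (Hc1 : cos x <= 1) by apply COS_bound.
  assert (E3 : (cos x - sin x) * exp t <= 2 * exp (- t)).
  { unfold ch in E2. nra. }
  assert (cos x - sin x <= 2 / (exp t * exp t)).
  { apply Rmult_le_reg_r with (exp t * exp t). nra.
    unfold Rdiv. rewrite Rmult_assoc, Rinv_l by nra. nra. }
  lra.
Qed.

Lemma At_bound n : INR (S n) * PI - PI / 4 < At n.
Proof.
  destruct (At_spec n) as [HA E]. assert (HP := PI_RGT_0).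
  set (x := INR (S n) * PI - At n).
  assert (Ht : At n = INR (S n) * PI - x) by (unfold x; ring).
  unfold h2 in E. rewrite Ht, sin_shiftm, cos_shiftm in E. rewrite <- Ht in E.
  assert (Hc := cos_kpi2 (S n)).
  assert (K : sin x * ch (At n) = cos x * sh (At n)).
  { assert (cos (INR (S n) * PI) * (sin x * ch (At n) - cos x * sh (At n)) = 0) by lra.
    apply Rmult_integral in H. destruct H as [H|H]; [|lra]. rewrite H in Hc. lra. }
  assert (0 < INR (S n) * PI) by apply kpi_pos.
  assert (1 <= INR (S n)) by (rewrite S_INR; assert (0 <= INR n) by apply pos_INR; lra).
  destruct (key_bound x (At n)) as [H1 _]; auto. unfold x; lra. nra. unfold x; lra.
Qed.

Lemma exp6 : 64 < exp 6.
Proof.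
  assert (H := exp_ineq1 1 ltac:(lra)).
  replace 6 with (1 + 1 + 1 + 1 + 1 + 1) by ring. rewrite !exp_plus.
  assert (2 < exp 1) by lra. assert (4 < exp 1 * exp 1) by nra. assert (8 < exp 1 * exp 1 * exp 1) by nra.
  assert (16 < exp 1 * exp 1 * exp 1 * exp 1) by nra. assert (32 < exp 1 * exp 1 * exp 1 * exp 1 * exp 1) by nra.
  nra.
Qed.

Lemma exp_lin m : 40 * INR (S m) <= exp (6 * INR (S m)).
Proof.
  induction m.
  - simpl. assert (H := exp6). replace (6 * 1) with 6 by ring. lra.
  - rewrite (S_INR (S m)). replace (6 * (INR (S m) + 1)) with (6 * INR (S m) + 6) by ring.
    rewrite exp_plus. assert (H := exp6). assert (1 <= INR (S m)) by (rewrite S_INR; assert (0 <= INR m) by apply pos_INR; lra).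
    assert (0 <= (exp (6 * INR (S m)) - 40 * INR (S m)) * exp 6) by (apply Rmult_le_pos; lra).
    nra.
Qed.

Lemma Bt_bound n : PI / 4 - 1 / (20 * INR (S n)) <= Bt n - INR (S n) * PI /\ Bt n - INR (S n) * PI < PI / 4.
Proof.
  destruct (Bt_spec n) as [HB E]. assert (HP := PI_RGT_0). assert (HP3 := PI_gt3).
  set (x := Bt n - INR (S n) * PI).
  assert (Ht : Bt n = INR (S n) * PI + x) by (unfold x; ring).
  unfold h1 in E. rewrite Ht, sin_shift, cos_shift in E. rewrite <- Ht in E.
  assert (Hc := cos_kpi2 (S n)).
  assert (K : sin x * ch (Bt n) = cos x * sh (Bt n)).
  { assert (cos (INR (S n) * PI) * (sin x * ch (Bt n) - cos x * sh (Bt n)) = 0) by lra.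
    apply Rmult_integral in H. destruct H as [H|H]; [|lra]. rewrite H in Hc. lra. }
  assert (Hk := kpi_pos n).
  assert (H1m : 1 <= INR (S n)) by (rewrite S_INR; assert (0 <= INR n) by apply pos_INR; lra).
  destruct (key_bound x (Bt n)) as [H1 H2]; auto. unfold x; lra. lra.
  split; auto.
  assert (Hexp : 40 * INR (S n) <= exp (Bt n) * exp (Bt n)).
  { rewrite <- exp_plus. apply Rle_trans with (exp (6 * INR (S n))). apply exp_lin.
    destruct (Rle_lt_or_eq_dec _ _ (Rlt_le _ _ (Rlt_le_trans (6 * INR (S n)) (Bt n + Bt n) (Bt n + Bt n) ltac:(nra) (Rle_refl _)))) as [Hl|Hl].
    left; apply exp_increasing; auto. rewrite Hl; right; auto. }
  assert (HE0 : 0 < exp (Bt n) * exp (Bt n)) by (assert (0 < exp (Bt n)) by apply exp_pos; nra).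
  set (EE := exp (Bt n) * exp (Bt n)) in *.
  assert (2 / EE <= 1 / (20 * INR (S n))).
  { apply Rmult_le_reg_r with (20 * INR (S n) * EE). nra.
    replace (2 / EE * (20 * INR (S n) * EE)) with (40 * INR (S n)) by (field; lra).
    replace (1 / (20 * INR (S n)) * (20 * INR (S n) * EE)) with EE by (field; lra).
    auto. }
  lra.
Qed.

Lemma final_ineq j : eA j > eL j * eB j.
Proof.
  assert (HP := PI_RGT_0). assert (HP3 := PI_gt3). assert (HP4 := PI_4).
  destruct (Nat.Even_or_Odd j) as [[n ->]|[n ->]].
  - unfold eA, eL, eB. rewrite tauA_even, tauB_even.
    assert (HA := At_bound n).
    assert (Ha : 0 <= INR n) by apply pos_INR.
    replace (INR (S (2 * n))) with (2 * INR n + 1) by (rewrite S_INR, mult_INR; simpl; ring).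
    rewrite S_INR in *. set (a := INR n) in *. set (X := 2 * At n).
    assert (HX : (2 * a + 3 / 2) * PI < X) by (unfold X; lra).
    assert (HX2 : ((2 * a + 3 / 2) * PI) * ((2 * a + 3 / 2) * PI) < X * X).
    { apply Rmult_le_0_lt_compat; nra. }
    set (Y := (2 * a + 1) * (2 * a + 2) * (PI * PI)).
    assert (HY : Y < X * X) by (unfold Y; nra).
    assert (HY0 : 0 < Y) by (unfold Y; assert (0 < PI * PI) by nra; nra).
    assert (Y * Y < X * X * (X * X)) by (apply Rmult_le_0_lt_compat; nra).
    replace (((2 * a + 1) * PI) ^ 2 * (2 * ((a + 1) * PI) * (2 * ((a + 1) * PI)))) with (Y * Y) by (unfold Y; ring).
    lra.
  - unfold eA, eL, eB. rewrite tauA_odd, tauB_odd.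
    destruct (Bt_bound n) as [Hx1 Hx2]. destruct (tB_spec n) as [Ht _].
    replace (INR (S (2 * n + 1))) with (2 * INR (S n)) by (rewrite !S_INR, plus_INR, mult_INR; simpl; ring).
    assert (Hm : 1 <= INR (S n)) by (rewrite S_INR; assert (0 <= INR n) by apply pos_INR; lra).
    set (m := INR (S n)) in *. set (x := Bt n - m * PI) in *. set (T := tB n) in *.
    assert (HB : Bt n = m * PI + x) by (unfold x; ring). rewrite HB.
    assert (Hx0 : 7 / 10 <= x).
    { assert (1 / (20 * m) <= 1 / 20).
      { unfold Rdiv. rewrite !Rmult_1_l. apply Rinv_le_contravar; lra. }
      lra. }
    assert (H2x : - PI / 10 <= m * PI * (2 * x - PI / 2)).
    { assert (- (1 / (10 * m)) <= 2 * x - PI / 2) by (replace (1 / (10 * m)) with (2 * (1 / (20 * m))) by (field; lra); lra).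
      assert (m * PI * (- (1 / (10 * m))) = - PI / 10) by (field; lra).
      assert (0 < m * PI) by nra. nra. }
    assert (HB2 : m * PI * T < (m * PI + x) * (m * PI + x)).
    { assert (0 < m * PI) by nra.
      assert (m * PI * T < m * PI * (m * PI + PI / 2)) by (apply Rmult_lt_compat_l; lra).
      nra. }
    set (B := m * PI + x) in *.
    assert (0 < m * PI * T) by (assert (0 < m * PI) by nra; nra).
    assert ((m * PI * T) * (m * PI * T) < (B * B) * (B * B)) by (apply Rmult_le_0_lt_compat; nra).
    nra.
Qed.

Theorem proposition4p1 (j : nat) :
  (exists Lam lam sig : R,
     nth_eig bilap_eig j Lam /\ nth_eig lap_eig j lam /\ nth_eig buck_eig j sig) /\
  (forall Lam lam sig : R,
     nth_eig bilap_eig j Lam -> nth_eig lap_eig j lam -> nth_eig buck_eig j sig ->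
     Lam > lam * sig).
Proof.
  assert (HA := nth_seq bilap_eig eA eA_step bilap_iff).
  assert (HL := nth_seq lap_eig eL eL_step lap_iff).
  assert (HB := nth_seq buck_eig eB eB_step buck_iff).
  split.
  - exists (eA j), (eL j), (eB j). split; [apply HA; auto|]. split; [apply HL; auto|apply HB; auto].
  - intros Lam lam sig H1 H2 H3. apply HA in H1. apply HL in H2. apply HB in H3. subst.
    apply final_ineq.
Qed.
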